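(* Let $X$ be a collectionwise normal space with $\operatorname{ind} X=0$, and let $A$ be a discrete subset of $X$. Then there exists a pairwise disjoint family $\{V_a : a\in A\}$ of clopen subsets of $X$ such that $a\in V_a$ for each $a\in A$ and the set $X\setminus\bigcup_{a\in A}V_a$ is clopen.
   Context: A space $X$ is collectionwise normal if it is $T_1$ and for every discrete family $\{F_s\}_{s\in S}$ of closed subsets of $X$ there is a discrete family $\{V_s\}_{s\in S}$ of open sets with $F_s\subseteq V_s$ for all $s$. A family of subsets is discrete if each point has a neighbourhood meeting at most one member; a subset $D$ is discrete if the family of its singletons is discrete. $\operatorname{ind}$ denotes the small inductive dimension. *)

(* Defs.v *)
From HB Require Import structures.
From mathcomp Require Import all_boot all_order all_algebra.
From mathcomp Require Import all_classical all_reals all_analysis.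
Set Implicit Arguments. Unset Strict Implicit. Unset Printing Implicit Defensive.
Local Open Scope classical_set_scope.

Definition discrete_family {T : topologicalType} {S : Type} (F : S -> set T) :=
  forall x : T, exists U : set T, nbhs x U /\
    forall s t : S, F s `&` U !=set0 -> F t `&` U !=set0 -> s = t.

Definition discrete_subset {T : topologicalType} (D : set T) :=
  discrete_family (fun d : {x : T | D x} => [set proj1_sig d]).

Definition collectionwise_normal (T : topologicalType) :=
  @accessible_space T /\
  forall (S : Type) (F : S -> set T),
    (forall s, closed (F s)) -> discrete_family F ->
    exists V : S -> set T,
      (forall s, open (V s)) /\ discrete_family V /\ (forall s, F s `<=` V s).

(* ind X = 0 : X is nonempty (ind of the empty space is -1) and every point has
   arbitrarily small open neighbourhoods with empty boundary, i.e. clopen ones. *)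
Definition ind_zero (T : topologicalType) :=
  (exists x : T, True) /\
  forall (x : T) (U : set T), open U -> U x ->
    exists V : set T, clopen V /\ V x /\ V `<=` U.

(* Main.v *)
Require Import Defs.
From HB Require Import structures.
From mathcomp Require Import all_boot all_order all_algebra.
From mathcomp Require Import all_classical all_reals all_analysis.
Local Open Scope classical_set_scope.

Lemma discrete_union_closed (X : topologicalType) (S : Type) (W : S -> set X) :
  (forall s, closed (W s)) -> discrete_family W -> closed (\bigcup_(s in setT) W s).
Proof.
move=> Wc Wd x clx; apply: contrapT => nx.
have [U [Ux Uu]] := Wd x.
have [y [[s _ Wsy] Uy]] := clx U Ux.
have Ns : nbhs x (U `&` ~` W s).
  apply: filterI => //; apply: open_nbhs_nbhs; split; first by rewrite openC.
  by move=> Wsx; apply: nx; exists s.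
have [z [[t _ Wtz] [Uz nWsz]]] := clx _ Ns.
have ts : t = s by apply: Uu; [exists z | exists y].
by subst t; apply: nWsz.
Qed.

Theorem mainTheorem4 (X : topologicalType) (A : set X) :
  collectionwise_normal X -> ind_zero X -> discrete_subset A ->
  exists V : X -> set X,
    (forall a, A a -> clopen (V a) /\ V a a) /\
    (forall a b, A a -> A b -> a <> b -> V a `&` V b = set0) /\
    clopen (~` (\bigcup_(a in A) V a)).
Proof.
move=> [acc cwn] [_ ind] dA.
have [V' [V'o [V'd V'sub]]] := cwn _ (fun d : {x : X | A x} => [set proj1_sig d]) (fun s => @accessible_closed_set1 X acc (proj1_sig s)) dA.
have : forall s : {x : X | A x}, exists W, clopen W /\ W (proj1_sig s) /\ W `<=` V' s.
  move=> s; apply: ind => //; exact: V'sub.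
move=> /choice [W HW].
have Wd : discrete_family W.
  move=> x; have [U [Ux Uu]] := V'd x; exists U; split => // s t [y [Wy Uy]] [z [Wz Uz]].
  apply: Uu; [exists y; split => //; exact: (HW s).2.2 | exists z; split => //; exact: (HW t).2.2].
pose V x := match pselect (A x) with left h => W (exist _ x h) | right _ => set0 end.
have VE : forall a (h : A a), V a = W (exist _ a h).
  move=> a h; rewrite /V; case: pselect => // h'.
  by rewrite (Prop_irrelevance h h').
have UE : \bigcup_(a in A) V a = \bigcup_(s in setT) W s.
  apply/seteqP; split => x.
    by move=> [a Aa]; rewrite (VE a Aa) => ?; exists (exist _ a Aa).
  by move=> [[a Aa] _ ?]; exists a => //; rewrite (VE a Aa).
exists V; split; [|split].
- move=> a Aa; rewrite (VE a Aa); split; [exact: (HW _).1 | exact: (HW _).2.1].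
- move=> a b Aa Ab ab; rewrite (VE a Aa) (VE b Ab); apply/seteqP; split => // x [Wa Wb].
  have [U [Ux Uu]] := Wd x.
  have := Uu (exist _ a Aa) (exist _ b Ab).
  have Hx : forall P : set X, P x -> P `&` U !=set0.
    by move=> P Px; exists x; split => //; exact: nbhs_singleton.
  by move=> /(_ (Hx _ Wa) (Hx _ Wb)) [].
- rewrite UE; split.
  + rewrite openC; apply: discrete_union_closed => // s; exact: (HW s).1.2.
  + rewrite closedC; apply: bigcup_open => s _; exact: (HW s).1.1.
Qed.
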